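(* Let $p$ be an odd prime, $v$ an integer with $1<v<p-1$, $g\in\{2,\dots,p-1\}$ a primitive root modulo $p$, and $t\ge1$. For $z\in\{0,\dots,v-1\}^t$ let $\lambda(z)=\#\{x\in\{0,\dots,p-2\}:\ (g^{x+\iota}\,\%\,p)\,\%\,v=z(\iota)\ \forall\,0\le\iota<t\}$. If $p\ge v\,g^{t-1}$ and $g\ge v$, then $\lambda(z)>0$ for all $z\in\{0,\dots,v-1\}^t$.
   Context: $x\,\%\,m$ denotes the least nonnegative remainder of the integer $x$ modulo $m$. *)

(* Defs.v *)
From mathcomp Require Import all_boot.
Set Implicit Arguments. Unset Strict Implicit. Unset Printing Implicit Defensive.

Definition primitive_root_mod (p g : nat) : Prop :=
  coprime g p /\ forall k, 0 < k < p.-1 -> g ^ k %% p != 1.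

Arguments primitive_root_mod : clear implicits.
Definition lambda (p v g t : nat) (z : 'I_t -> 'I_v) : nat :=
  #|[set x : 'I_p.-1 | [forall i : 'I_t, (g ^ (x + i) %% p) %% v == z i]]|.
Arguments lambda : clear implicits.

(* Main.v *)
Require Import Defs.
From mathcomp Require Import all_boot.
From mathcomp Require Import zify.

Lemma solve_lin (p v a0 c : nat) : 0 < v -> coprime p v ->
  exists2 d, d < v & a0 + p * d = c %[mod v].
Proof.
move=> v0 cop.
have [a _ Ha] := Bezoutr p v0.
rewrite (eqP cop) in Ha.
case/dvdnP: Ha => k Hk.
set e := a0 + (v - 1) * c.
exists ((a * e) %% v); first by rewrite ltn_mod.
rewrite -modnDmr modnMmr modnDmr.
apply/eqP; rewrite -(eqn_modDr e).
have -> : a0 + p * (a * e) + e = a0 + (k * e) * v.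
  have : (1 + a * p) * e = k * v * e by rewrite Hk.
  nia.
have -> : c + e = a0 + c * v by rewrite /e; nia.
by rewrite !(addnC a0) !modnMDl.
Qed.

Lemma Qlem (p v g : nat) (z : nat -> nat) : 0 < v -> v <= g -> coprime p v ->
  (forall i, z i < v) -> forall n, exists2 D, D < g ^ n &
  forall y, p * D < g ^ n * y -> g ^ n * y < p * D.+1 -> y %% v = z 0 ->
  forall i, i <= n -> (g ^ i * y %% p) %% v = z i.
Proof.
move=> v0 vg cop zv; elim=> [|n [D HD IH]].
  exists 0; first by []. move=> y; rewrite expn0 !mul1n muln0 muln1 => y0 yp yz i.
  by rewrite leqn0 => /eqP ->; rewrite expn0 mul1n (modn_small yp).
have g0 : 0 < g by apply: leq_trans vg.
have [d dv Hd] := solve_lin p v (p * (D * g) + z n.+1) (g ^ n.+1 * z 0) v0 cop.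
exists (D * g + d).
  rewrite expnS; nia.
move=> y H1 H2 yz i; rewrite leq_eqVlt => /orP [/eqP ->|].
  set M := g ^ n.+1 * y.
  have [r Mr rp] : exists2 r, M = p * (D * g + d) + r & r < p.
    exists (M - p * (D * g + d)); first by lia.
    rewrite /M; lia.
  rewrite Mr [p * _]mulnC modnMDl (modn_small rp).
  have : p * (D * g + d) + r = p * (D * g + d) + z n.+1 %[mod v].
    have -> : p * (D * g + d) + z n.+1 = p * (D * g) + z n.+1 + p * d by rewrite mulnDr; lia.
    by rewrite Hd -Mr /M -modnMmr yz.
  move/eqP; rewrite eqn_modDl => /eqP ->.
  by rewrite modn_small.
rewrite ltnS => iln.
have E : g ^ n * y * g = g ^ n.+1 * y by rewrite expnSr mulnAC.
apply: IH => //.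
- rewrite -(ltn_pmul2r g0) E; apply: leq_trans H1; nia.
- rewrite -(ltn_pmul2r g0) E; apply: (leq_trans H2); nia.
Qed.

Lemma dlog (p g : nat) : prime p -> primitive_root_mod p g ->
  forall y, 0 < y < p -> exists2 x, x < p.-1 & g ^ x %% p = y.
Proof.
move=> pp [cop prim] y /andP [y0 yp].
have p1 : 1 < p by apply: prime_gt1.
have cpx (x : nat) : coprime p (g ^ x) by rewrite coprime_sym coprimeXl.
have nz (x : nat) : g ^ x %% p != 0.
  apply/negP => /eqP H.
  have : p %| g ^ x * 1 by rewrite muln1 /dvdn H.
  by rewrite (Gauss_dvdr _ (cpx x)) dvdn1; lia.
have fP (x : 'I_p.-1) : (g ^ x %% p).-1 < p.-1.
  have : g ^ x %% p < p by rewrite ltn_mod; lia.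
  move: (nz x); lia.
have g0 : 0 < g.
  case: g cop {nz fP cpx prim} => //; rewrite /coprime gcd0n; lia.
pose f (x : 'I_p.-1) : 'I_p.-1 := Ordinal (fP x).
have finj : injective f.
  have key : forall a b : nat, a < b -> b < p.-1 -> g ^ a %% p != g ^ b %% p.
    move=> a b ab bp; apply/negP => /eqP Hab.
    have Hk : g ^ b = g ^ a * g ^ (b - a) by rewrite -expnD subnKC // ltnW.
    have : g ^ a * g ^ (b - a) == g ^ a * 1 %[mod p] by rewrite -Hk muln1 Hab.
    rewrite eqn_mod_dvd; last by rewrite leq_mul2l expn_gt0 g0 orbT.
    rewrite -mulnBr (Gauss_dvdr _ (cpx a)).
    rewrite -eqn_mod_dvd ?expn_gt0 ?g0 // (modn_small p1) => /eqP Hb.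
    have Hc : 0 < b - a < p.-1 by apply/andP; split; lia.
    by move: (prim _ Hc); rewrite Hb eqxx.
  move=> a b /(congr1 val) /= H.
  have H' : g ^ a %% p = g ^ b %% p by move: H (nz a) (nz b); lia.
  apply/val_inj => /=.
  case: (ltngtP a b) => // ab.
    by move: (key a b ab (ltn_ord b)); rewrite H' eqxx.
  by move: (key b a ab (ltn_ord a)); rewrite H' eqxx.
have yo : y.-1 < p.-1 by lia.
have := inj_card_onto finj (leqnn _) (Ordinal yo).
case/codomP => x /(congr1 val) /= Hx.
exists x => //; move: Hx (nz x); lia.
Qed.

Theorem corollary5 (p v g t : nat) :
  prime p -> odd p -> 1 < v < p.-1 -> 2 <= g <= p.-1 ->
  primitive_root_mod p g -> 1 <= t ->
  v * g ^ t.-1 <= p -> v <= g ->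
  forall z : 'I_t -> 'I_v, 0 < lambda p v g t z.
Proof.
move=> pp _ /andP [v1 vp] /andP [g2 gp] prim t1 vG vg z.
have v0 : 0 < v by lia.
have p1 : 1 < p by apply: prime_gt1.
have cop : coprime p v.
  rewrite prime_coprime //; apply/negP => /dvdn_leq; lia.
pose z' (i : nat) : nat := if i < t =P true is ReflectT H then z (Ordinal H) else 0.
have z'v : forall i, z' i < v.
  by move=> i; rewrite /z'; case: eqP.
have [D DG HD] := Qlem p v g z' v0 vg cop z'v t.-1.
set G := g ^ t.-1 in DG HD vG.
have G0 : 0 < G by rewrite expn_gt0; lia.
have Gv : G * v < p.
  rewrite ltn_neqAle mulnC vG andbT; apply/negP => /eqP H.
  have : v %| p by rewrite -H dvdn_mulr.
  case/primeP: pp => _ /(_ v) Hp /Hp /orP [] /eqP; lia.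
set q := ((p * D) %/ G).+1.
have qG : p * D < q * G by apply: ltn_ceil.
have qG2 : (p * D) %/ G * G <= p * D by apply: leq_divM.
set y := q + (z' 0 + v - q %% v) %% v.
have yv : y %% v = z' 0.
  have -> : y = (z' 0 + v - q %% v) %% v + q by rewrite /y addnC.
  rewrite modnDml.
  have -> : z' 0 + v - q %% v + q = z' 0 + (q %/ v).+1 * v.
    have := divn_eq q v; have := ltn_mod q v; rewrite v0 => Hm; move: (z'v 0); lia.
  by rewrite addnC modnMDl modn_small.
have yle : y <= q + v.-1.
  have := ltn_mod (z' 0 + v - q %% v) v; rewrite v0 /y; lia.
have qy : q <= y by rewrite /y leq_addr.
have Hy1 : p * D < G * y.
  by apply: (leq_trans qG); rewrite [G * y]mulnC leq_mul2r qy orbT.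
have Hy2 : G * y < p * D.+1.
  apply: (@leq_ltn_trans (G * (q + v.-1))); first by rewrite leq_mul2l yle orbT.
  rewrite /q; set k := (p * D) %/ G in qG2 *.
  have -> : G * (k.+1 + v.-1) = k * G + G * v.
    by rewrite (mulnC k) -mulnDr; congr (G * _); lia.
  rewrite mulnS; lia.
have y0 : 0 < y by apply: leq_trans qy.
have yp : y < p.
  have : y * G < p * G by rewrite mulnC; apply: (leq_trans Hy2); rewrite leq_mul2l; lia.
  by rewrite ltn_pmul2r.
have yy : 0 < y < p by rewrite y0 yp.
have [x xp gx] := dlog p g pp prim y yy.
rewrite /lambda card_gt0; apply/set0Pn; exists (Ordinal xp).
rewrite inE; apply/forallP => i /=.
have := HD y Hy1 Hy2 yv i.
have -> : (g ^ (x + i) %% p) = (g ^ i * y) %% p.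
  by rewrite -gx modnMmr expnD mulnC.
have iT : i <= t.-1 by have := ltn_ord i; lia.
move=> /(_ iT) ->.
rewrite /z'; case: eqP => // Hi.
  by apply/eqP; congr (nat_of_ord (z _)); apply: val_inj.
  by case: Hi; apply: ltn_ord.
Qed.
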